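(* The Lie algebra $T^*\mathfrak{su}(2)$ (of dimension 6) admits no $k$-symplectic structure for any $k\ge1$.
   Context: $\mathfrak{su}(2)$ is the Lie algebra of $2\times2$ skew-Hermitian traceless complex matrices. For a Lie algebra $\mathfrak{g}$, $T^*\mathfrak{g}=\mathfrak{g}\oplus\mathfrak{g}^*$ with bracket $[u+\alpha,v+\beta]=[u,v]+\mathrm{ad}_u^*\beta-\mathrm{ad}_v^*\alpha$, where $(\mathrm{ad}_u^*\alpha)(v)=-\alpha([u,v])$. A $k$-symplectic structure on a real Lie algebra $\mathfrak{g}$ of dimension $n(k+1)$ ($n,k\ge1$) is a pair consisting of a Lie subalgebra $\mathfrak{h}\subset\mathfrak{g}$ of dimension $nk$ and a family $(\theta_1,\dots,\theta_k)$ of skew-symmetric bilinear forms on $\mathfrak{g}$ such that: (i) $\bigcap_{i=1}^k\ker\theta_i=\{0\}$, where $\ker\theta_i=\{u\in\mathfrak{g}:\theta_i(u,v)=0\ \forall v\in\mathfrak{g}\}$; (ii) each $\theta_i$ is a 2-cocycle: $\theta_i([u,v],w)+\theta_i([v,w],u)+\theta_i([w,u],v)=0$ for all $u,v,w$; (iii) $\theta_i(u,v)=0$ for all $u,v\in\mathfrak{h}$ and all $i$. *)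

(* Defs.v *)
From HB Require Import structures.
From mathcomp Require Import all_boot all_order all_algebra.
From mathcomp Require Import complex.
From mathcomp Require Import reals.
Set Implicit Arguments. Unset Strict Implicit. Unset Printing Implicit Defensive.
Import Order.TTheory GRing.Theory Num.Theory.
Local Open Scope ring_scope.

Section Defs.
Variable R : realType.

(* ---------- su(2) ----------------------------------------------------------
   su(2) = { X in M_2(C) | X^* = -X, tr X = 0 }.  Every such X is uniquely
       [[ i a      , b + i c ],
        [ -b + i c , -i a    ]]      (a, b, c real),
   so we use the real linear chart x = (a,b,c) : 'rV_3 <-> su(2). *)
Definition su2_mx (x : 'rV[R]_3) : 'M[R[i]]_2 :=
  \matrix_(i < 2, j < 2)
    if (i == 0 :> nat) && (j == 0 :> nat) then Complex 0 (x 0 0)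
    else if (i == 0 :> nat) then Complex (x 0 1) (x 0 2%:R)
    else if (j == 0 :> nat) then Complex (- x 0 1) (x 0 2%:R)
    else Complex 0 (- x 0 0).

Definition su2_coord (X : 'M[R[i]]_2) : 'rV[R]_3 :=
  \row_(j < 3)
    if (j == 0 :> nat) then complex.Im (X 0 0)
    else if (j == 1 :> nat) then complex.Re (X 0 1)
    else complex.Im (X 0 1).

Definition su2_br (x y : 'rV[R]_3) : 'rV[R]_3 :=
  su2_coord (su2_mx x * su2_mx y - su2_mx y * su2_mx x).

(* ---------- T^* su(2) = su(2) (+) su(2)^* ----------------------------------
   A covector alpha in su(2)^* is represented by its coordinates in the dual
   basis of the chart basis e_0, e_1, e_2:  alpha(v) = sum_j alpha_j v_j. *)
Definition e3 (j : 'I_3) : 'rV[R]_3 := delta_mx 0 j.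
Definition dual_pair (alpha v : 'rV[R]_3) : R := \sum_(j < 3) alpha 0 j * v 0 j.

Definition coad (u alpha : 'rV[R]_3) : 'rV[R]_3 :=
  \row_(j < 3) (- dual_pair alpha (su2_br u (e3 j))).

(* elements of T^* su(2) are row_mx u alpha : 'rV_(3+3);
   [u+alpha, v+beta] = [u,v] + ad^*_u beta - ad^*_v alpha *)
Definition tsu2_br (x y : 'rV[R]_(3 + 3)) : 'rV[R]_(3 + 3) :=
  row_mx (su2_br (lsubmx x) (lsubmx y))
         (coad (lsubmx x) (rsubmx y) - coad (lsubmx y) (rsubmx x)).

End Defs.

(* The subalgebra h is the row space of
   the matrix H (so dim h = \rank H). *)
Definition skew_bilinear (R : realType) (m : nat) (f : 'rV[R]_m -> 'rV[R]_m -> R)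
  : Prop :=
  (forall (a : R) (u v w : 'rV[R]_m), f (a *: u + v) w = a * f u w + f v w) /\
  (forall (a : R) (u v w : 'rV[R]_m), f w (a *: u + v) = a * f w u + f w v) /\
  (forall u v : 'rV[R]_m, f u v = - f v u).

Definition is_k_symplectic (R : realType) (m : nat)
  (br : 'rV[R]_m -> 'rV[R]_m -> 'rV[R]_m) (n k : nat) (H : 'M[R]_m)
  (theta : 'I_k -> 'rV[R]_m -> 'rV[R]_m -> R) : Prop :=
  (0 < n)%N /\ (0 < k)%N /\ m = (n * (k + 1))%N /\ \rank H = (n * k)%N /\
  (forall u v : 'rV[R]_m, (u <= H)%MS -> (v <= H)%MS -> (br u v <= H)%MS) /\
  (forall i, skew_bilinear (theta i)) /\
  (forall u : 'rV[R]_m, (forall i v, theta i u v = 0) -> u = 0) /\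
  (forall i (u v w : 'rV[R]_m),
      theta i (br u v) w + theta i (br v w) u + theta i (br w u) v = 0) /\
  (forall i (u v : 'rV[R]_m), (u <= H)%MS -> (v <= H)%MS -> theta i u v = 0).
Arguments is_k_symplectic {R m} br n k H theta.

(* Main.v *)
Require Import Defs.
From HB Require Import structures.
From mathcomp Require Import all_boot all_order all_algebra.
From mathcomp Require Import complex.
From mathcomp Require Import reals.
From mathcomp Require Import ring lra.
From Stdlib Require Import Lia.
From mathcomp Require Import zify.
Set Implicit Arguments. Unset Strict Implicit. Unset Printing Implicit Defensive.
Import Order.TTheory GRing.Theory Num.Theory.
Local Open Scope ring_scope.
Section S.
Variable R : realType.
Definition c3 (x : 'rV[R]_3) (k : nat) : R := x 0 (inord k).
Lemma c3E (x : 'rV[R]_3) (p : 'I_3) : x 0 p = c3 x p.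
Proof. by rewrite /c3; congr (x 0 _); apply/val_inj; rewrite /= inordK. Qed.
Definition crf (a b : nat -> R) (j : nat) : R :=
  match j with
  | 0 => 2 * (a 1%N * b 2%N - a 2%N * b 1%N)
  | 1 => 2 * (a 2%N * b 0%N - a 0%N * b 2%N)
  | _ => 2 * (a 0%N * b 1%N - a 1%N * b 0%N) end.
Lemma su2_brE (x y : 'rV[R]_3) (j : 'I_3) : su2_br x y 0 j = crf (c3 x) (c3 y) j.
Proof.
rewrite /su2_br /su2_coord mxE.
case: j => [[|[|[|j]]] Hj] //=;
rewrite !mxE !big_ord_recr !big_ord0 /= !mxE /= !add0r /= !c3E /=; ring.
Qed.
Definition c6 (x : 'rV[R]_(3+3)) (k : nat) : R := x 0 (inord k).
Lemma c6E (x : 'rV[R]_(3+3)) (p : 'I_(3+3)) : x 0 p = c6 x p.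
Proof. by rewrite /c6; congr (x 0 _); apply/val_inj; rewrite /= inordK. Qed.
Definition brf (a b : nat -> R) (j : nat) : R :=
  match j with
  | 0 => 2 * (a 1%N * b 2%N - a 2%N * b 1%N)
  | 1 => 2 * (a 2%N * b 0%N - a 0%N * b 2%N)
  | 2 => 2 * (a 0%N * b 1%N - a 1%N * b 0%N)
  | 3 => 2 * ((a 1%N * b 5%N - a 2%N * b 4%N) - (b 1%N * a 5%N - b 2%N * a 4%N))
  | 4 => 2 * ((a 2%N * b 3%N - a 0%N * b 5%N) - (b 2%N * a 3%N - b 0%N * a 5%N))
  | 5 => 2 * ((a 0%N * b 4%N - a 1%N * b 3%N) - (b 0%N * a 4%N - b 1%N * a 3%N))
  | _ => 0 end.
Lemma c3l (x : 'rV[R]_(3+3)) (n : nat) : (n < 3)%N -> c3 (lsubmx x) n = c6 x n.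
Proof. by move=> Hn; rewrite /c3 mxE c6E /= inordK. Qed.
Lemma c3r (x : 'rV[R]_(3+3)) (n : nat) : (n < 3)%N -> c3 (rsubmx x) n = c6 x (3 + n).
Proof. by move=> Hn; rewrite /c3 mxE c6E /= inordK. Qed.
Lemma e3c (j : 'I_3) (n : nat) : (n < 3)%N -> c3 (e3 R j) n = if (j == n :> nat) then 1 else 0.
Proof. move=> Hn; rewrite /c3 /e3 mxE /= -(inj_eq val_inj) /= inordK // eq_sym; by case: (_ == _). Qed.
Lemma coadE (u a : 'rV[R]_3) (j : 'I_3) : coad u a 0 j = crf (c3 u) (c3 a) j.
Proof.
rewrite /coad /dual_pair mxE !big_ord_recr !big_ord0 /= add0r !su2_brE /= !c3E /=.
case: j => [[|[|[|j]]] Hj] //=; rewrite !e3c //=; ring.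
Qed.


Lemma coadE' (u a : 'rV[R]_3) (j : 'I_3) : - dual_pair a (su2_br u (e3 R j)) = crf (c3 u) (c3 a) j.
Proof.
rewrite /dual_pair !big_ord_recr !big_ord0 /= add0r !su2_brE /= !c3E /=.
case: j => [[|[|[|j]]] Hj] //=; rewrite !e3c //=; ring.
Qed.
Lemma tsu2_brE (x y : 'rV[R]_(3+3)) (j : 'I_(3+3)) :
  tsu2_br x y 0 j = brf (c6 x) (c6 y) j.
Proof.
rewrite /tsu2_br mxE; case: splitP => k Hk.
  rewrite su2_brE Hk.
  case: k {Hk} => [[|[|[|k]]] Hk] //=.
  all: try (rewrite !c3l; reflexivity).
rewrite mxE [in X in _ + X]mxE.
rewrite -> !coadE.
rewrite Hk.
case: k {Hk} => [[|[|[|k]]] Hk]; last by exfalso; move: Hk; rewrite !ltnS ltn0.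
all: rewrite /= ?c3l ?c3r.
all: try exact: isT.
all: ring.
Qed.

Definition Ev (p : nat) : 'rV[R]_(3+3) := delta_mx 0 (inord p).
Definition L6 : seq nat := [:: 0; 1; 2; 3; 4; 5]%N.
Definition Tsum (a b : nat -> R) (t : nat -> nat -> R) : R :=
  \sum_(p <- L6) \sum_(q <- L6) a p * b q * t p q.

Section Lin.
Variable f : 'rV[R]_(3+3) -> 'rV[R]_(3+3) -> R.
Hypothesis Hf : skew_bilinear f.
Lemma f0l w : f 0 w = 0.
Proof.
case: Hf => H1 _; have := H1 1 0 0 w; rewrite scale1r addr0 mul1r => H; lra.
Qed.
Lemma fDl u v w : f (u + v) w = f u w + f v w.
Proof. by case: Hf => H1 _; rewrite -[u]scale1r H1 mul1r scale1r. Qed.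
Lemma fZl a u w : f (a *: u) w = a * f u w.
Proof. by case: Hf => H1 _; rewrite -[a *: u]addr0 H1 f0l addr0. Qed.
Lemma f0r w : f w 0 = 0.
Proof. by case: Hf => _ [_ H3]; rewrite H3 f0l oppr0. Qed.
Lemma fDr u v w : f w (u + v) = f w u + f w v.
Proof. by case: Hf => _ [_ H3]; rewrite H3 fDl opprD -!H3. Qed.
Lemma fZr a u w : f w (a *: u) = a * f w u.
Proof. by case: Hf => _ [_ H3]; rewrite H3 fZl -mulrN -H3. Qed.
Lemma fsuml I (r : seq I) (F : I -> 'rV[R]_(3+3)) w :
  f (\sum_(i <- r) F i) w = \sum_(i <- r) f (F i) w.
Proof. by apply: (big_morph (fun u => f u w)) => [u v|]; [rewrite fDl | rewrite f0l]. Qed.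
Lemma fsumr I (r : seq I) (F : I -> 'rV[R]_(3+3)) w :
  f w (\sum_(i <- r) F i) = \sum_(i <- r) f w (F i).
Proof. by apply: (big_morph (fun u => f w u)) => [u v|]; [rewrite fDr | rewrite f0r]. Qed.

Lemma vec_sum (x : 'rV[R]_(3+3)) : x = \sum_(p <- L6) c6 x p *: Ev p.
Proof.
rewrite (_ : L6 = index_iota 0 6) // big_mkord.
rewrite {1}[x]row_sum_delta.
apply: eq_bigr => p _; rewrite c6E /Ev; congr (_ *: delta_mx 0 _).
by apply/val_inj; rewrite /= inordK.
Qed.
Lemma thetaE x y : f x y = Tsum (c6 x) (c6 y) (fun p q => f (Ev p) (Ev q)).
Proof.
rewrite {1}[x]vec_sum {1}[y]vec_sum fsuml /Tsum; apply: eq_bigr => p _.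
rewrite fZl fsumr big_distrr; apply: eq_bigr => q _.
by rewrite fZr; exact: mulrA.
Qed.
Definition cE (p : nat) (k : nat) : R := if (k == p)%N then 1 else 0.
Lemma Tsum_ext a a' b b' t : (forall k, (k < 6)%N -> a k = a' k) ->
  (forall k, (k < 6)%N -> b k = b' k) -> Tsum a b t = Tsum a' b' t.
Proof.
move=> Ha Hb; rewrite /Tsum; apply: eq_big_seq => p Hp.
apply: eq_big_seq => q Hq.
have Hp6 : (p < 6)%N by move: Hp; rewrite (_ : L6 = iota 0 6) // mem_iota.
have Hq6 : (q < 6)%N by move: Hq; rewrite (_ : L6 = iota 0 6) // mem_iota.
by rewrite Ha // Hb.
Qed.
Lemma c6Ev p k : (p < 6)%N -> (k < 6)%N -> c6 (Ev p) k = cE p k.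
Proof.
move=> Hp Hk; rewrite /c6 /Ev /cE mxE /= -(inj_eq val_inj) /= !inordK //.
by case: (_ == _).
Qed.
Lemma c6br x y k : (k < 6)%N -> c6 (tsu2_br x y) k = brf (c6 x) (c6 y) k.
Proof. by move=> Hk; rewrite /c6; rewrite -> tsu2_brE; rewrite /= inordK. Qed.
Hypothesis Hc : forall u v w, f (tsu2_br u v) w + f (tsu2_br v w) u + f (tsu2_br w u) v = 0.
Definition T p q := f (Ev p) (Ev q).
Lemma fEv x y : f x y = Tsum (c6 x) (c6 y) T.
Proof. exact: thetaE. Qed.
Lemma cocE p q r : (p < 6)%N -> (q < 6)%N -> (r < 6)%N ->
  Tsum (brf (cE p) (cE q)) (cE r) T + Tsum (brf (cE q) (cE r)) (cE p) T
  + Tsum (brf (cE r) (cE p)) (cE q) T = 0.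
Proof.
move=> Hp Hq Hr; have H := Hc (Ev p) (Ev q) (Ev r).
rewrite -> !fEv in H.
rewrite -[RHS]H.
congr (_ + _ + _); apply: Tsum_ext => k Hk; rewrite ?c6br ?c6Ev //.
all: rewrite /brf; case: k Hk => [|[|[|[|[|[|k]]]]]] //= _; rewrite !c6Ev //.
Qed.
Lemma skT p q : T p q = - T q p.
Proof. by case: Hf => _ [_ H3]; rewrite /T H3. Qed.
Lemma fbr x y w : f (tsu2_br x y) w = \sum_(k <- L6) brf (c6 x) (c6 y) k * f (Ev k) w.
Proof.
rewrite {1}[tsu2_br x y]vec_sum fsuml; apply: eq_big_seq => k Hk.
have Hk6 : (k < 6)%N by move: Hk; rewrite (_ : L6 = iota 0 6) // mem_iota.
by rewrite fZl c6br.
Qed.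
Lemma cocE2 p q r : (p < 6)%N -> (q < 6)%N -> (r < 6)%N ->
  \sum_(k <- L6) brf (cE p) (cE q) k * T k r + \sum_(k <- L6) brf (cE q) (cE r) k * T k p
  + \sum_(k <- L6) brf (cE r) (cE p) k * T k q = 0.
Proof.
move=> Hp Hq Hr; have H := Hc (Ev p) (Ev q) (Ev r).
rewrite -> !fbr in H.
rewrite -[RHS]H /T.
have E : forall a b, (a < 6)%N -> (b < 6)%N -> forall k, (k \in L6) ->
   brf (cE a) (cE b) k = brf (c6 (Ev a)) (c6 (Ev b)) k.
  move=> a b Ha Hb k Hk.
  rewrite /brf; case: k Hk => [|[|[|[|[|[|k]]]]]] //= _; rewrite !c6Ev //.
congr (_ + _ + _); apply: eq_big_seq => k Hk; rewrite E //.
Qed.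
Ltac coc p q r :=
  let H := fresh "H" in
  have H := @cocE2 p q r isT isT isT;
  unfold L6, cE in H; rewrite -> !big_cons, !big_nil in H; simpl in H.
Lemma Trel :
  T 3 4 = 0 /\ T 3 5 = 0 /\ T 4 5 = 0 /\ T 4 3 = 0 /\ T 5 3 = 0 /\ T 5 4 = 0 /\
  T 3 3 = 0 /\ T 4 4 = 0 /\
  T 5 5 = 0 /\ T 0 3 = 0 /\ T 1 4 = 0 /\ T 2 5 = 0 /\ T 3 0 = 0 /\ T 4 1 = 0 /\ T 5 2 = 0 /\
  T 3 1 = T 0 4 /\ T 4 0 = - T 0 4 /\ T 4 2 = T 1 5 /\ T 5 1 = - T 1 5 /\
  T 5 0 = T 2 3 /\ T 3 2 = - T 2 3.
Proof.
have E0 : 2 * T 5 3 = 0 by coc 0%N 4%N 3%N; lra.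
have E1 : (-2) * T 4 3 = 0 by coc 0%N 5%N 3%N; lra.
have E2 : (-2) * T 5 4 = 0 by coc 1%N 3%N 4%N; lra.
have E3 : 2 * T 3 4 = 0 by coc 1%N 5%N 4%N; lra.
have E4 : 2 * T 4 5 = 0 by coc 2%N 3%N 5%N; lra.
have E5 : (-2) * T 3 5 = 0 by coc 2%N 4%N 5%N; lra.
have E6 : 2 * T 2 5 + 2 * T 3 0 + 2 * T 4 1 = 0 by coc 0%N 1%N 5%N; lra.
have E7 : 2 * T 0 3 + 2 * T 4 1 + 2 * T 5 2 = 0 by coc 1%N 2%N 3%N; lra.
have E8 : 2 * T 1 4 + 2 * T 5 2 + 2 * T 3 0 = 0 by coc 2%N 0%N 4%N; lra.
have E9 : 2 * T 2 3 + (-2) * T 5 0 = 0 by coc 0%N 1%N 3%N; lra.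
have E10 : 2 * T 0 4 + (-2) * T 3 1 = 0 by coc 1%N 2%N 4%N; lra.
have E11 : 2 * T 1 5 + (-2) * T 4 2 = 0 by coc 2%N 0%N 5%N; lra.
have S := skT.
have := S 3%N 4%N; have := S 3%N 5%N; have := S 4%N 5%N; have := S 3%N 3%N; have := S 4%N 4%N; have := S 5%N 5%N.
have := S 0%N 3%N; have := S 1%N 4%N; have := S 2%N 5%N; have := S 1%N 3%N; have := S 0%N 4%N.
have := S 2%N 4%N; have := S 1%N 5%N; have := S 0%N 5%N; have := S 2%N 3%N.
move=> *; clear S.
(repeat split; lra).
Qed.
Lemma fV (z y : 'rV[R]_(3+3)) : c6 z 0 = 0 -> c6 z 1 = 0 -> c6 z 2 = 0 ->
  f z y = - (c6 y 0 * (c6 z 4 * T 0 4 - c6 z 5 * T 2 3)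
           + c6 y 1 * (c6 z 5 * T 1 5 - c6 z 3 * T 0 4)
           + c6 y 2 * (c6 z 3 * T 2 3 - c6 z 4 * T 1 5)).
Proof.
move=> Hz0 Hz1 Hz2.
have [E1 [E2 [E3 [E4 [E5 [E6 [E7 [E8 [E9 [E10 [E11 [E12 [E13 [E14 [E15 [E16 [E17 [E18 [E19 [E20 E21]]]]]]]]]]]]]]]]]]]] := Trel.
rewrite fEv; unfold Tsum, L6; rewrite -> !big_cons, !big_nil; simpl.
rewrite -> Hz0, Hz1, Hz2, E1, E2, E3, E4, E5, E6, E7, E8, E9, E10, E11, E12, E13, E14, E15, E16, E17, E18, E19, E20, E21.
ring.
Qed.
End Lin.
End S.
Section D.
Variable R : realType.
Definition Vm : 'M[R]_(3, 3+3) := row_mx 0 1%:M.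
Lemma rankVm : \rank Vm = 3%N.
Proof.
apply/eqP; rewrite eqn_leq rank_leq_row /=.
have H1 : (\rank (1%:M : 'M[R]_3) <= \rank Vm)%N.
  have -> : (1%:M : 'M[R]_3) = Vm *m col_mx 0 1%:M by rewrite /Vm mul_row_col mulmx0 mulmx1 add0r.
  exact: mxrankM_maxl.
by move: H1; rewrite mxrank1.
Qed.
Lemma lshift_inord k : (k < 3)%N -> (inord k : 'I_(3+3)) = lshift 3 (inord k).
Proof. by move=> Hk; apply/val_inj; rewrite /= !inordK // (leq_trans Hk). Qed.
Lemma rshift_inord k : (k < 3)%N -> (inord (3 + k) : 'I_(3+3)) = rshift 3 (inord k).
Proof. by move=> Hk; apply/val_inj; rewrite /= !inordK // ltn_add2l. Qed.
Lemma c6_rowl (A B : 'rV[R]_3) k : (k < 3)%N -> c6 (row_mx A B) k = c3 A k.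
Proof. by move=> Hk; rewrite /c6 lshift_inord // row_mxEl. Qed.
Lemma c6_rowr (A B : 'rV[R]_3) k : (k < 3)%N -> c6 (row_mx A B) (3 + k) = c3 B k.
Proof. by move=> Hk; rewrite /c6 rshift_inord // row_mxEr. Qed.
Lemma subVm (y : 'rV[R]_(3+3)) : (y <= Vm)%MS -> c6 y 0 = 0 /\ c6 y 1 = 0 /\ c6 y 2 = 0.
Proof.
case/submxP => D ->; rewrite /Vm mul_mx_row mulmx0 mulmx1.
by rewrite !c6_rowl // /c3 !mxE.
Qed.

Lemma c6_row3 (A B : 'rV[R]_3) : c6 (row_mx A B) 3 = c3 B 0.
Proof. exact: (@c6_rowr A B 0). Qed.
Lemma c6_row4 (A B : 'rV[R]_3) : c6 (row_mx A B) 4 = c3 B 1.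
Proof. exact: (@c6_rowr A B 1). Qed.
Lemma c6_row5 (A B : 'rV[R]_3) : c6 (row_mx A B) 5 = c3 B 2.
Proof. exact: (@c6_rowr A B 2). Qed.
Lemma c3_0 k : c3 (0 : 'rV[R]_3) k = 0.
Proof. by rewrite /c3 mxE. Qed.
Lemma c6_sub (u v : 'rV[R]_(3+3)) (s : R) k : c6 (u - s *: v) k = c6 u k - s * c6 v k.
Proof. by rewrite /c6 !mxE. Qed.
Lemma zero_s_sub (v : 'rV[R]_(3+3)) : c6 v 0 = 0 -> c6 v 1 = 0 -> c6 v 2 = 0 -> (v <= Vm)%MS.
Proof.
move=> H0 H1 H2; apply/submxP; exists (rsubmx v).
rewrite /Vm mul_mx_row mulmx0 mulmx1.
rewrite -{1}[v]hsubmxK; congr row_mx; apply/rowP => j.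
rewrite [RHS]mxE.
have E : lsubmx v 0 j = c3 (lsubmx v) j by rewrite c3E.
rewrite E.
case: j {E} => [[|[|[|j]]] Hj] /=; rewrite ?c3l //.
Qed.
Definition cr0 (x y : 'rV[R]_(3+3)) := c6 x 1 * c6 y 5 - c6 x 2 * c6 y 4.
Definition cr1 (x y : 'rV[R]_(3+3)) := c6 x 2 * c6 y 3 - c6 x 0 * c6 y 5.
Definition cr2 (x y : 'rV[R]_(3+3)) := c6 x 0 * c6 y 4 - c6 x 1 * c6 y 3.

Lemma prop3 (x0 x1 x2 b0 b1 b2 : R) :
  x1 * b2 = x2 * b1 -> x2 * b0 = x0 * b2 -> x0 * b1 = x1 * b0 ->
  [/\ x0 * b1 = x1 * b0, x0 * b2 = x2 * b0 & x1 * b2 = x2 * b1].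
Proof. by move=> h1 h2 h3; split => //; rewrite h2. Qed.

Lemma solve_k (xk xc bk bc : R) : bc != 0 -> xk * bc = xc * bk -> xk - xc / bc * bk = 0.
Proof. by move=> Hb E; rewrite mulrAC -E mulfK // subrr. Qed.
Lemma claimD (H : 'M[R]_(3+3)) : (4 <= \rank H)%N ->
  ~ (forall x y, (x <= H)%MS -> (y <= H)%MS -> c6 y 0 = 0 -> c6 y 1 = 0 -> c6 y 2 = 0 ->
      cr0 x y = 0 /\ cr1 x y = 0 /\ cr2 x y = 0).
Proof.
move=> Hr Hno.
have Hcap : (0 < \rank (H :&: Vm))%N.
  have := mxrank_sum_cap H Vm; rewrite rankVm.
  have := rank_leq_col (H + Vm)%MS. lia.
have [y1 [Hy1H [Hy1V Hy1nz]]] : exists y1 : 'rV[R]_(3+3), (y1 <= H)%MS /\ (y1 <= Vm)%MS /\ y1 != 0.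
  move: Hcap; rewrite lt0n mxrank_eq0 => Hnz.
  case: (pickP (fun i : 'I_(3+3) => row i (H :&: Vm)%MS != 0)) => [i Hi | Hall].
    exists (row i (H :&: Vm)%MS); split; last split => //.
      exact: submx_trans (row_sub _ _) (capmxSl _ _).
    exact: submx_trans (row_sub _ _) (capmxSr _ _).
  exfalso; move/negP: Hnz; apply; apply/eqP/row_matrixP => i.
  by move: (Hall i) => /= /negbFE /eqP ->; rewrite linear0.
have [Hy0 [Hy1 Hy2]] := subVm Hy1V.
set b := rsubmx y1.
have Ey1 : y1 = row_mx 0 b.
  rewrite -{1}[y1]hsubmxK; congr row_mx; apply/rowP => j.
  have E : lsubmx y1 0 j = c3 (lsubmx y1) j by rewrite c3E.
  rewrite E [RHS]mxE; case: j {E} => [[|[|[|j]]] Hj] /=; rewrite ?c3l //.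
have [c Hbc] : exists c : 'I_3, c3 b c != 0.
  case: (pickP (fun c : 'I_3 => c3 b c != 0)) => [c Hc | Hall]; first by exists c.
  exfalso; move/negP: Hy1nz; apply; rewrite Ey1.
  have -> : b = 0.
    apply/rowP => j; have := Hall j; rewrite /= -c3E mxE => /negbFE /eqP ->; by rewrite mxE.
  by apply/eqP; exact: row_mx0.
set a : 'rV[R]_(3+3) := row_mx b 0.
have Ha k : (k < 3)%N -> c6 a k = c3 b k by move=> Hk; rewrite c6_rowl.
have HU : (H <= a + Vm)%MS.
  apply/row_subP => r; set x := row r H.
  have HxH : (x <= H)%MS by exact: row_sub.
  have [h0 [h1 h2]] := Hno x y1 HxH Hy1H Hy0 Hy1 Hy2.
  move: h0 h1 h2; rewrite /cr0 /cr1 /cr2 Ey1 c6_row3 c6_row4 c6_row5 => h0 h1 h2.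
  have h0' : c6 x 1 * c3 b 2 = c6 x 2 * c3 b 1 by apply/eqP; rewrite -subr_eq0 h0.
  have h1' : c6 x 2 * c3 b 0 = c6 x 0 * c3 b 2 by apply/eqP; rewrite -subr_eq0 h1.
  have h2' : c6 x 0 * c3 b 1 = c6 x 1 * c3 b 0 by apply/eqP; rewrite -subr_eq0 h2.
  set t := c6 x c / c3 b c.
  rewrite -(subrK (t *: a) x) addrC.
  apply: addmx_sub_adds; first by apply: scalemx_sub; exact: submx_refl.
  have Hk : forall k, (k < 3)%N -> c6 (x - t *: a) k = 0.
  { move=> k Hk; rewrite c6_sub Ha // /t; clear t.
    move: Hbc; case: c => [[|[|[|cc]]] Hc] //= Hb; case: k Hk => [|[|[|kk]]] //= _.
    all: apply: (solve_k Hb); lra. }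
  by apply: zero_s_sub; apply: Hk.
have Hrank : (\rank (a + Vm)%MS <= 4)%N.
  have := (mxrank_adds_leqif a Vm).1; rewrite rankVm.
  have := rank_leq_row a. lia.
have HrH := mxrankS HU.
have Heq : (H == a + Vm)%MS.
  rewrite -(mxrank_leqif_eq HU).2 eqn_leq HrH /=. lia.
move/andP: Heq => [_ HUH].
have HaH : (a <= H)%MS := submx_trans (addsmxSl a Vm) HUH.
have HVH : (Vm <= H)%MS := submx_trans (addsmxSr a Vm) HUH.
have Hyj : forall j, (row_mx 0 (e3 R j) <= H)%MS.
  move=> j; apply: submx_trans HVH; apply/submxP; exists (e3 R j).
  by rewrite /Vm mul_mx_row mulmx0 mulmx1.
have Hz : forall j k, (k < 3)%N -> c6 (row_mx 0 (e3 R j)) k = 0.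
  by move=> j k Hk; rewrite c6_rowl // c3_0.
have [g0 [_ g2]] := Hno a _ HaH (Hyj (inord 1)) (Hz _ 0%N isT) (Hz _ 1%N isT) (Hz _ 2%N isT).
have [f0 _] := Hno a _ HaH (Hyj (inord 2)) (Hz _ 0%N isT) (Hz _ 1%N isT) (Hz _ 2%N isT).
move: g0 g2 f0; rewrite /cr0 /cr2 !c6_row3 !c6_row4 !c6_row5 !e3c // !inordK //= !Ha //=.
move=> g0 g2 f0.
have E0 : c3 b 0 = 0 by lra.
have E1 : c3 b 1 = 0 by lra.
have E2 : c3 b 2 = 0 by lra.
move: Hbc; case: c => [[|[|[|cc]]] Hc] //=; by rewrite ?E0 ?E1 ?E2 eqxx.
Qed.
End D.
Section M.
Variable R : realType.
Lemma sq3_neq0 (p0 p1 p2 : R) : ~ (p0 = 0 /\ p1 = 0 /\ p2 = 0) -> p0 * p0 + p1 * p1 + p2 * p2 != 0.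
Proof.
move=> Hn; apply/eqP => H0; apply: Hn.
have h0 : 0 <= p0 * p0 by exact: mulr_ge0_le0 || nra.
have h1 : 0 <= p1 * p1 by nra.
have h2 : 0 <= p2 * p2 by nra.
have e0 : p0 * p0 = 0 by lra.
have e1 : p1 * p1 = 0 by lra.
have e2 : p2 * p2 = 0 by lra.
by move/eqP: e0; rewrite mulf_eq0 orbb => /eqP; move/eqP: e1; rewrite mulf_eq0 orbb => /eqP;
  move/eqP: e2; rewrite mulf_eq0 orbb => /eqP.
Qed.
Lemma alg (x0 x1 x2 y3 y4 y5 B0 B1 B2 : R) :
 ~ (x1*y5 - x2*y4 = 0 /\ x2*y3 - x0*y5 = 0 /\ x0*y4 - x1*y3 = 0) ->
 x0*(y4*B2 - y5*B1) + x1*(y5*B0 - y3*B2) + x2*(y3*B1 - y4*B0) = 0 ->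
 x0*(2*(x2*y3 - x0*y5)*B2 - 2*(x0*y4 - x1*y3)*B1)
 + x1*(2*(x0*y4 - x1*y3)*B0 - 2*(x1*y5 - x2*y4)*B2)
 + x2*(2*(x1*y5 - x2*y4)*B1 - 2*(x2*y3 - x0*y5)*B0) = 0 ->
 x1*B2 - x2*B1 = 0 /\ x2*B0 - x0*B2 = 0 /\ x0*B1 - x1*B0 = 0.
Proof.
set P0 := x1*y5 - x2*y4; set P1 := x2*y3 - x0*y5; set P2 := x0*y4 - x1*y3.
move=> Hn E1 E2.
have nn := sq3_neq0 Hn.
have n2 : (2 * (P0 * P0 + P1 * P1 + P2 * P2)) != 0 by rewrite mulf_neq0 // pnatr_eq0.
set e1 := _ + _ + _ in E1; set e2 := _ + _ + _ in E2.
have i0 : 2 * (P0 * P0 + P1 * P1 + P2 * P2) * (x1*B2 - x2*B1) = 2 * (x1*P2 - x2*P1) * e1 - P0 * e2.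
  rewrite /e1 /e2 /P0 /P1 /P2; ring.
have i1 : 2 * (P0 * P0 + P1 * P1 + P2 * P2) * (x2*B0 - x0*B2) = 2 * (x2*P0 - x0*P2) * e1 - P1 * e2.
  rewrite /e1 /e2 /P0 /P1 /P2; ring.
have i2 : 2 * (P0 * P0 + P1 * P1 + P2 * P2) * (x0*B1 - x1*B0) = 2 * (x0*P1 - x1*P0) * e1 - P2 * e2.
  rewrite /e1 /e2 /P0 /P1 /P2; ring.
rewrite E1 E2 !mulr0 subrr in i0 i1 i2.
move/eqP: i0; rewrite mulf_eq0 (negPf n2) /= => /eqP ->.
move/eqP: i1; rewrite mulf_eq0 (negPf n2) /= => /eqP ->.
move/eqP: i2; rewrite mulf_eq0 (negPf n2) /= => /eqP ->.
by [].
Qed.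

Lemma kill (k : nat) (theta : 'I_k -> 'rV[R]_(3 + 3) -> 'rV[R]_(3 + 3) -> R)
  (Hsb : forall i, skew_bilinear (theta i))
  (Hcoc : forall i (u v w : 'rV[R]_(3+3)),
      theta i (tsu2_br u v) w + theta i (tsu2_br v w) u + theta i (tsu2_br w u) v = 0)
  (Hker : forall u : 'rV[R]_(3+3), (forall i v, theta i u v = 0) -> u = 0)
  (w0 w1 w2 : R) : ~ (w0 = 0 /\ w1 = 0 /\ w2 = 0) ->
  (forall i, w1 * T (theta i) 0 4 - w2 * T (theta i) 2 3 = 0 /\
             w2 * T (theta i) 1 5 - w0 * T (theta i) 0 4 = 0 /\
             w0 * T (theta i) 2 3 - w1 * T (theta i) 1 5 = 0) -> False.
Proof.
move=> Hw Hi.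
set wv : 'rV[R]_3 := \row_(j < 3) (match nat_of_ord j with 0 => w0 | 1 => w1 | _ => w2 end).
set z : 'rV[R]_(3+3) := row_mx 0 wv.
have Hz : forall m, (m < 3)%N -> c6 z m = 0 by move=> m Hm; rewrite c6_rowl // c3_0.
have Hz3 : c6 z 3 = w0 by rewrite c6_row3 /c3 mxE inordK.
have Hz4 : c6 z 4 = w1 by rewrite c6_row4 /c3 mxE inordK.
have Hz5 : c6 z 5 = w2 by rewrite c6_row5 /c3 mxE inordK.
have Z : z = 0.
  apply: Hker => i v.
  rewrite (fV (Hsb i) (Hcoc i) v (Hz 0%N isT) (Hz 1%N isT) (Hz 2%N isT)) Hz3 Hz4 Hz5.
  have [h0 [h1 h2]] := Hi i.
  rewrite h0 h1 h2; ring.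
apply: Hw.
have : c6 z 3 = 0 /\ c6 z 4 = 0 /\ c6 z 5 = 0 by rewrite Z /c6 !mxE.
by rewrite Hz3 Hz4 Hz5.
Qed.
End M.

Theorem mainTheorem13 :
  forall (R : realType) (n k : nat) (H : 'M[R]_(3 + 3))
         (theta : 'I_k -> 'rV[R]_(3 + 3) -> 'rV[R]_(3 + 3) -> R),
    ~ is_k_symplectic (@tsu2_br R) n k H theta.
Proof.
move=> R n k H theta [Hn [Hk [Hm [Hr [Hsub [Hsb [Hker [Hcoc Hiso]]]]]]]].
have [Hk1 | Hk2] : k = 1%N \/ (2 <= k)%N by lia.
-
  set i0 : 'I_k := Ordinal Hk.
  have Hi : forall i : 'I_k, i = i0.
    by move=> i; apply/val_inj; have := ltn_ord i; rewrite /=; lia.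
  set B0 := T (theta i0) 1 5; set B1 := T (theta i0) 2 3; set B2 := T (theta i0) 0 4.
  case: (boolP [&& B0 == 0, B1 == 0 & B2 == 0]) => [/and3P [/eqP E0 /eqP E1 /eqP E2] | Hnz].
  + apply: (kill Hsb Hcoc Hker (w0 := 1) (w1 := 0) (w2 := 0)).
      by case=> /eqP; rewrite oner_eq0.
    move=> i; rewrite (Hi i) -/B0 -/B1 -/B2 E0 E1 E2.
    by split; [|split]; ring.
  + apply: (kill Hsb Hcoc Hker (w0 := B0) (w1 := B1) (w2 := B2)).
      by case=> E0 [E1 E2]; move: Hnz; rewrite E0 E1 E2 eqxx.
    move=> i; rewrite (Hi i) -/B0 -/B1 -/B2.
    by split; [|split]; ring.
-
  have Hr4 : (4 <= \rank H)%N by rewrite Hr; nia.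
  apply: (claimD Hr4) => x y Hx Hy hy0 hy1 hy2.
  case: (boolP [&& cr0 x y == 0, cr1 x y == 0 & cr2 x y == 0]) =>
    [/and3P [/eqP -> /eqP -> /eqP ->] // | Hnz].
  exfalso.
  have Hnz' : ~ (cr0 x y = 0 /\ cr1 x y = 0 /\ cr2 x y = 0).
    by case=> E0 [E1 E2]; move: Hnz; rewrite E0 E1 E2 eqxx.
  apply: (kill Hsb Hcoc Hker (w0 := c6 x 0) (w1 := c6 x 1) (w2 := c6 x 2)).
    by case=> E0 [E1 E2]; apply: Hnz'; rewrite /cr0 /cr1 /cr2 E0 E1 E2 !mul0r !subrr.
  move=> i.
  set z := tsu2_br x y.
  have Hz : (z <= H)%MS by exact: Hsub.
  have z0 : c6 z 0 = 0 by rewrite c6br //= hy1 hy2; ring.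
  have z1 : c6 z 1 = 0 by rewrite c6br //= hy0 hy2; ring.
  have z2 : c6 z 2 = 0 by rewrite c6br //= hy0 hy1; ring.
  have z3 : c6 z 3 = 2 * (c6 x 1 * c6 y 5 - c6 x 2 * c6 y 4)
    by rewrite c6br //= hy1 hy2; ring.
  have z4 : c6 z 4 = 2 * (c6 x 2 * c6 y 3 - c6 x 0 * c6 y 5)
    by rewrite c6br //= hy0 hy2; ring.
  have z5 : c6 z 5 = 2 * (c6 x 0 * c6 y 4 - c6 x 1 * c6 y 3)
    by rewrite c6br //= hy0 hy1; ring.
  have Hsk : forall u v, theta i u v = - theta i v u by case: (Hsb i) => _ [].
  have E1 : theta i y x = 0 by rewrite Hsk Hiso // oppr0.
  have E2 : theta i z x = 0 by rewrite Hsk Hiso // oppr0.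
  rewrite (fV (Hsb i) (Hcoc i) x hy0 hy1 hy2) in E1.
  rewrite (fV (Hsb i) (Hcoc i) x z0 z1 z2) z3 z4 z5 in E2.
  apply: alg.
  - exact: Hnz'.
  - lra.
  - lra.
Qed.
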